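(* Let $\mathfrak g$ be a finite-dimensional complex Lie algebra and $e_1,\dots,e_N\in\mathfrak g$ linear semi-invariants that are pairwise non-proportional. If the Jordan–Kronecker invariants of $\mathfrak g$ contain no Kronecker $3\times3$ block and at most one Kronecker $1\times1$ block, then $e_1,\dots,e_N$ are linearly independent.
   Context: An element $e\in\mathfrak g$, $e\ne0$, is a linear semi-invariant if there is $\chi\in\mathfrak g^*$ with $[u,e]=\chi(u)e$ for all $u\in\mathfrak g$ (equivalently $\mathbb Ce$ is an ideal). For $x\in\mathfrak g^*$, $\mathcal A_x$ is the skew form $(\xi,\eta)\mapsto\langle x,[\xi,\eta]\rangle$. By the Jordan–Kronecker theorem a pair of skew forms on a finite-dimensional complex space decomposes into Jordan $2n\times2n$ blocks and Kronecker $(2k-1)\times(2k-1)$ blocks ($k\ge1$; the $1\times1$ block is a pair of zero $1\times1$ matrices), uniquely up to order. The Kronecker blocks in the JK invariants of $\mathfrak g$ are those of $(\mathcal A_x,\mathcal A_a)$ for $(x,a)$ in a nonempty Zariski open subset of $\mathfrak g^*\times\mathfrak g^*$, where they are constant. *)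

(* Defs.v *)
From HB Require Import structures.
From mathcomp Require Import all_boot all_order all_algebra.
From mathcomp Require Import mpoly.
Set Implicit Arguments. Unset Strict Implicit. Unset Printing Implicit Defensive.
Import Order.TTheory GRing.Theory Num.Theory.
Local Open Scope ring_scope.

Section JK.
Variable C : numClosedFieldType.

Definition is_lie_bracket (n : nat) (br : 'rV[C]_n -> 'rV[C]_n -> 'rV[C]_n) :=
  [/\ (forall (c : C) x y z, br (c *: x + y) z = c *: br x z + br y z),
      (forall (c : C) x y z, br x (c *: y + z) = c *: br x y + br x z),
      (forall x, br x x = 0) &
      (forall x y z, br x (br y z) + br y (br z x) + br z (br x y) = 0)].

(* g^* is identified with 'rV_n through the pairing <x, xi> = sum_i x_i xi_i *)
Definition dpair (n : nat) (x xi : 'rV[C]_n) : C := \sum_(i < n) x 0 i * xi 0 i.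

Definition linear_semi_invariant (n : nat) (br : 'rV[C]_n -> 'rV[C]_n -> 'rV[C]_n)
    (e : 'rV[C]_n) :=
  e != 0 /\ exists chi : 'rV[C]_n, forall u, br u e = dpair chi u *: e.

Definition formA (n : nat) (br : 'rV[C]_n -> 'rV[C]_n -> 'rV[C]_n) (x : 'rV[C]_n)
  : 'M[C]_n := \matrix_(i, j) dpair x (br (delta_mx 0 i) (delta_mx 0 j)).

(* JordanB lam m : Jordan 2(m+1) x 2(m+1) block with finite eigenvalue lam,
   JordanInf m   : Jordan 2(m+1) x 2(m+1) block with infinite eigenvalue,
   Kron k        : Kronecker (2k+1) x (2k+1) block (Kron 0 is the 1x1 zero block,
                   Kron 1 the 3x3 block). *)
Inductive jkblock := JordanB of C & nat | JordanInf of nat | Kron of nat.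

Definition jksize (b : jkblock) : nat :=
  match b with
  | JordanB _ m => (m.+1).*2
  | JordanInf m => (m.+1).*2
  | Kron k => k.*2.+1
  end.

(* skew matrix [[0, M], [-M^T, 0]] with M an s x t matrix, nat-indexed *)
Definition skewblk (s : nat) (M : nat -> nat -> C) (i j : nat) : C :=
  if (i < s)%N && (s <= j)%N then M i (j - s)%N
  else if (s <= i)%N && (j < s)%N then - M j (i - s)%N
  else 0.

Definition jordanE (lam : C) (p q : nat) : C :=
  if p == q then lam else if q == p.+1 then 1 else 0.
Definition idE (p q : nat) : C := if p == q then 1 else 0.

Definition blkA (b : jkblock) : nat -> nat -> C :=
  match b with
  | JordanB lam m => skewblk m.+1 (jordanE lam)
  | JordanInf m => skewblk m.+1 idE
  | Kron k => skewblk k.+1 idE                        (* (k+1) x k : [I_k ; 0] *)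
  end.
Definition blkB (b : jkblock) : nat -> nat -> C :=
  match b with
  | JordanB _ m => skewblk m.+1 idE
  | JordanInf m => skewblk m.+1 (jordanE 0)
  | Kron k => skewblk k.+1 (fun p q => if p == q.+1 then 1 else 0) (* [0 ; I_k] *)
  end.

Fixpoint blkdiag (f : jkblock -> nat -> nat -> C) (bs : seq jkblock) (i j : nat) : C :=
  match bs with
  | [::] => 0
  | b :: bs' =>
      let s := jksize b in
      if (i < s)%N then (if (j < s)%N then f b i j else 0)
      else if (j < s)%N then 0
      else blkdiag f bs' (i - s)%N (j - s)%N
  end.

Definition JK_decomposition (n : nat) (A B : 'M[C]_n) (bs : seq jkblock) :=
  (\sum_(b <- bs) jksize b)%N = n /\
  exists2 P : 'M[C]_n, P \in unitmx &
    P *m A *m P^T = \matrix_(i, j) blkdiag blkA bs i j /\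
    P *m B *m P^T = \matrix_(i, j) blkdiag blkB bs i j.

Definition is_Kron (k : nat) (b : jkblock) : bool :=
  if b is Kron k' then k' == k else false.

(* The Jordan--Kronecker invariants of g contain no Kronecker 3x3 block and at
   most one Kronecker 1x1 block: for all (x, a) in a nonempty Zariski open subset
   of g^* x g^* (containing the nonvanishing locus of a nonzero polynomial) the
   pair (A_x, A_a) has a JK decomposition with these Kronecker blocks. *)
Definition JK_no3_atmost1_one (n : nat) (br : 'rV[C]_n -> 'rV[C]_n -> 'rV[C]_n) :=
  exists2 p : {mpoly C[n + n]}, p != 0 &
    forall x a : 'rV[C]_n, p.@[fun i => row_mx x a 0 i] != 0 ->
      exists bs, JK_decomposition (formA br x) (formA br a) bs /\
        (count (is_Kron 1) bs = 0)%N /\ (count (is_Kron 0) bs <= 1)%N.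

End JK.

(* Main.v *)
Require Import Defs.
From HB Require Import structures.
From mathcomp Require Import all_boot all_order all_algebra.
From mathcomp Require Import mpoly.
From mathcomp Require Import ring.
Import Order.TTheory GRing.Theory Num.Theory.
Local Open Scope ring_scope.
Set Implicit Arguments. Unset Strict Implicit.


Lemma mmap_muni (R S : comNzRingType) k (f : {rmorphism R -> S}) (h : 'I_k.+1 -> S)
  (p : {mpoly R[k.+1]}) :
  mmap f h p = (map_poly (mmap f (fun i => h (widen_ord (leqnSn k) i))) (muni p)).[h ord_max].
Proof.
rewrite muniE rmorph_sum /= horner_sum {1}/mmap; apply: eq_bigr => m _.
rewrite -mul_polyC rmorphM /= map_polyC map_polyXn /=.
rewrite hornerCM hornerXn mmapZ mmapX /mmap1 big_ord_recr /= -mulrA; congr (_ * (_ * _)).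
apply: eq_bigr => i _; rewrite mnmE //.
Qed.
 

Lemma mpoly_evals0 (R : numDomainType) k (p : {mpoly R[k]}) :
  (forall v, p.@[v] = 0) -> p = 0.
Proof.
elim: k p => [|k IH] p Hp.
  have -> : p = (p.@[fun _ => 0])%:MP.
    rewrite -{1}(comp_mpoly_id p) /comp_mpoly /mmap /meval /mmap raddf_sum.
    by apply: eq_bigr => m _; rewrite /mmap1 !big_ord0 !mulr1.
  by rewrite Hp.
have Hq : muni p = 0.
  apply/polyP => j; rewrite coef0; apply: IH => v'.
  set r := map_poly (meval v') (muni p).
  have r0 : r = 0.
    apply/eqP; apply/negPn/negP => nz.
    pose rs := mkseq (fun i => i%:R : R) (size r).
    have H := max_poly_roots nz (rs := rs).
    rewrite /rs size_mkseq ltnn in H.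
    have Ha : all (root r) rs.
      apply/allP => t _; apply/rootP.
      pose ext := fun i : 'I_k.+1 => if unlift ord_max i is Some j then v' j else t.
      have := Hp ext; rewrite /meval (@mmap_muni _ _ _ idfun) => <-.
      rewrite /ext unlift_none; congr (_.[_]); apply: eq_map_poly => q; apply: meval_eq => i /=.
      have -> : widen_ord (leqnSn k) i = lift ord_max i by apply: val_inj; rewrite [RHS]lift_max.
      by rewrite liftK.
    have Hu : uniq rs.
      rewrite map_inj_uniq ?iota_uniq // => a b /eqP; rewrite eqr_nat => /eqP //.
    by have := H Ha Hu.
  by have := congr1 (fun q : {poly R} => q`_j) r0; rewrite coef_map coef0.
rewrite -(comp_mpoly_id p) /comp_mpoly (@mmap_muni _ _ _ (mpolyC _ (R:=R))) Hq.
by rewrite rmorph0 horner0.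
Qed.



Section Blk.
Variable C : numClosedFieldType.

Lemma sum_delta r (g : nat -> C) t :
  \sum_(0 <= i < r) g i * (if i == t then 1 else 0) = if (t < r)%N then g t else 0.
Proof.
elim: r => [|r IH]; first by rewrite big_geq.
rewrite big_nat_recr //= IH; case: (ltngtP t r) => h.
- by rewrite mulr0 addr0 ltnS (ltnW h).
- by rewrite mulr0 addr0 ltnS leqNgt h.
- by rewrite h add0r mulr1 ltnSn.
Qed.

Lemma skew_sum m r (M : nat -> nat -> C) (y : nat -> C) j :
  \sum_(0 <= i < m + r) y i * skewblk m M i j =
  if (j < m)%N then - \sum_(0 <= i < r) y (m + i)%N * M j i
  else \sum_(0 <= i < m) y i * M i (j - m)%N.
Proof.
rewrite (big_cat_nat (n:=m)) //= ?leq_addr //.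
have -> : \sum_(m <= i < m + r) y i * skewblk m M i j =
    \sum_(0 <= i < r) y (m + i)%N * skewblk m M (m + i)%N j.
  by rewrite -{1}[m]add0n big_addn addKn; apply: eq_bigr => i _; rewrite addnC.
rewrite /skewblk.
case: ltnP => hj.
  rewrite big1_seq ?add0r; last first.
    move=> i /andP[_]; rewrite mem_index_iota => /andP[_ hi].
    by rewrite andbF andbT leqNgt hi mulr0.
  rewrite -sumrN; apply: eq_bigr => i _.
  by rewrite andbF andbT leq_addr addKn mulrN.
rewrite [X in _ + X]big1 ?addr0; last first.
  by move=> i _; rewrite andbF andbT ltnNge leq_addr /= mulr0.
rewrite big_seq_cond [RHS]big_seq_cond; apply: eq_bigr => i.
by rewrite mem_index_iota andbT => /andP[_ ->].
Qed.


Lemma sum_zero s (y : nat -> C) (F : nat -> C) :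
  (forall i, (i < s)%N -> y i = 0) -> \sum_(0 <= i < s) y i * F i = 0.
Proof.
move=> H; rewrite big_seq big1 // => i; rewrite mem_index_iota => /andP[_ hi].
by rewrite H // mul0r.
Qed.

Lemma skew_id_inj m (y : nat -> C) :
  (forall j, (j < m + m)%N -> \sum_(0 <= i < m + m) y i * skewblk m (@idE C) i j = 0) ->
  forall i, (i < m + m)%N -> y i = 0.
Proof.
move=> H i hi; case: (ltnP i m) => him.
  have := H (m + i)%N; rewrite ltn_add2l him => /(_ isT).
  rewrite skew_sum ltnNge leq_addr /= addKn.
  by under eq_bigr => k _ do rewrite /idE; rewrite sum_delta him.
have him' : (i - m < m)%N by rewrite ltn_subLR.
have h2 : (i - m < m + m)%N by apply: ltn_addr.
have := H _ h2.
rewrite skew_sum him'.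
under eq_bigr => k _ do rewrite /idE eq_sym.
by rewrite sum_delta him' subnKC // => /eqP; rewrite oppr_eq0 => /eqP.
Qed.

Lemma kron_inj k (y0 y1 : nat -> C) : (2 <= k)%N ->
  (forall j, (j < k.+1 + k)%N -> \sum_(0 <= i < k.+1 + k) y0 i * skewblk k.+1 (@idE C) i j = 0) ->
  (forall j, (j < k.+1 + k)%N -> \sum_(0 <= i < k.+1 + k) y1 i *
      skewblk k.+1 (fun p q => if p == q.+1 then 1 else 0) i j = 0) ->
  (forall j, (j < k.+1 + k)%N -> \sum_(0 <= i < k.+1 + k) y0 i *
      skewblk k.+1 (fun p q => if p == q.+1 then 1 else 0) i j +
      \sum_(0 <= i < k.+1 + k) y1 i * skewblk k.+1 (@idE C) i j = 0) ->
  forall i, (i < k.+1 + k)%N -> y0 i = 0 /\ y1 i = 0.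
Proof.
move=> k2 HA HB HC.
have A1 q : (q < k)%N -> y0 (k.+1 + q)%N = 0.
  move=> hq; have hq1 : (q < k.+1)%N by apply: ltnW.
  have := HA q (ltn_addr _ hq1).
  rewrite skew_sum hq1.
  under eq_bigr => i _ do rewrite /idE eq_sym.
  by rewrite sum_delta hq => /eqP; rewrite oppr_eq0 => /eqP.
have A2 q : (q < k)%N -> y0 q = 0.
  move=> hq; have := HA (k.+1 + q)%N; rewrite ltn_add2l hq => /(_ isT).
  rewrite skew_sum ltnNge leq_addr /= addKn.
  by under eq_bigr => i _ do rewrite /idE; rewrite sum_delta ltnS ltnW.
have B1 q : (q < k)%N -> y1 (k.+1 + q)%N = 0.
  move=> hq; have hq1 : (q.+1 < k.+1)%N by [].
  have := HB q.+1 (ltn_addr _ hq1).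
  rewrite skew_sum hq1.
  under eq_bigr => i _ do rewrite eqSS eq_sym.
  by rewrite sum_delta hq => /eqP; rewrite oppr_eq0 => /eqP.
have B2 q : (q < k)%N -> y1 q.+1 = 0.
  move=> hq; have := HB (k.+1 + q)%N; rewrite ltn_add2l hq => /(_ isT).
  by rewrite skew_sum ltnNge leq_addr /= addKn sum_delta ltnS hq.
have C1 q : (q < k)%N -> y0 q.+1 + y1 q = 0.
  move=> hq; have := HC (k.+1 + q)%N; rewrite ltn_add2l hq => /(_ isT).
  rewrite !skew_sum ltnNge leq_addr /= addKn sum_delta ltnS hq.
  by under eq_bigr => i _ do rewrite /idE; rewrite sum_delta ltnS (ltnW hq).
move=> i hi; split.
  case: (ltngtP i k) => hik; first exact: A2.
    by rewrite -(subnKC hik) A1 // -(ltn_add2l k.+1) subnKC.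
  case: k k2 A1 A2 B1 B2 C1 hi hik {HA HB HC} => [|[|K]] // _ A1 A2 B1 B2 C1 hi hik.
  have := C1 K.+1 (ltnSn _); rewrite B2 ?addr0 ?hik //; exact: leqW.
case: i hi => [|i] hi.
  have := C1 0%N; rewrite (leq_trans _ k2) // => /(_ isT).
  by rewrite A2 ?add0r // (leq_trans _ k2).
case: (ltnP i k) => hik; first exact: B2.
have hq : (i - k < k)%N by rewrite ltn_subLR //; rewrite addSn ltnS in hi.
by have := B1 _ hq; rewrite addSn subnKC.
Qed.

Lemma blk_single (b : jkblock C) (y0 y1 : nat -> C) :
  ~~ is_Kron 1 b -> ~~ is_Kron 0 b ->
  (forall j, (j < jksize b)%N -> \sum_(0 <= i < jksize b) y0 i * blkA b i j = 0) ->
  (forall j, (j < jksize b)%N -> \sum_(0 <= i < jksize b) y1 i * blkB b i j = 0) ->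
  (forall j, (j < jksize b)%N -> \sum_(0 <= i < jksize b) y0 i * blkB b i j +
                                 \sum_(0 <= i < jksize b) y1 i * blkA b i j = 0) ->
  forall i, (i < jksize b)%N -> y0 i = 0 /\ y1 i = 0.
Proof.
case: b => [lam m | m | k] /= n1 n0 HA HB HC; rewrite -?addnn.
- rewrite -addnn in HA HB HC.
  have Y1 := skew_id_inj HB.
  have Y0 : forall i, (i < m.+1 + m.+1)%N -> y0 i = 0.
    apply: skew_id_inj => j hj; have := HC j hj.
    by rewrite (@sum_zero _ y1) ?addr0.
  by move=> i hi; rewrite Y0 ?Y1.
- rewrite -addnn in HA HB HC.
  have Y0 := skew_id_inj HA.
  have Y1 : forall i, (i < m.+1 + m.+1)%N -> y1 i = 0.
    apply: skew_id_inj => j hj; have := HC j hj.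
    by rewrite (@sum_zero _ y0) ?add0r.
  by move=> i hi; rewrite Y0 ?Y1.
- have E : (k.*2.+1 = k.+1 + k)%N by rewrite -addnn addSn.
  rewrite E in HA HB HC *.
  apply: kron_inj => //.
  by case: k n1 n0 {E HA HB HC} => [|[|k]].
Qed.

Fixpoint kron0_at (bs : seq (jkblock C)) (i : nat) : bool :=
  match bs with
  | [::] => false
  | b :: bs' => if (i < jksize b)%N then is_Kron 0 b else kron0_at bs' (i - jksize b)
  end.

Lemma blkdiag_sum f b bs T (U : nat -> C) j :
  \sum_(0 <= i < jksize b + T) U i * blkdiag f (b :: bs) i j =
  if (j < jksize b)%N then \sum_(0 <= i < jksize b) U i * f b i j
  else \sum_(0 <= i < T) U (jksize b + i)%N * blkdiag f bs i (j - jksize b).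
Proof.
rewrite (big_cat_nat (n:=jksize b)) //= ?leq_addr //.
have -> : \sum_(jksize b <= i < jksize b + T) U i * blkdiag f (b :: bs) i j =
    \sum_(0 <= i < T) U (jksize b + i)%N * blkdiag f (b :: bs) (jksize b + i)%N j.
  by rewrite -{1}[jksize b]add0n big_addn addKn; apply: eq_bigr => i _; rewrite addnC.
rewrite /=.
case: ltnP => hj.
  rewrite [X in _ + X]big1 ?addr0; last first.
    by move=> i _; rewrite ltnNge leq_addr /= mulr0.
  rewrite big_seq_cond [RHS]big_seq_cond; apply: eq_bigr => i.
  by rewrite mem_index_iota andbT => /andP[_ ->].
rewrite big_seq_cond big1 ?add0r; last first.
  move=> i; rewrite mem_index_iota andbT => /andP[_ hi].
  by rewrite hi mulr0.
apply: eq_bigr => i _.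
by rewrite ltnNge leq_addr /= addKn.
Qed.

Lemma blk_all (bs : seq (jkblock C)) (U0 U1 : nat -> C) :
  let T := (\sum_(b <- bs) jksize b)%N in
  count (is_Kron 1) bs = 0%N ->
  (forall j, (j < T)%N -> \sum_(0 <= i < T) U0 i * blkdiag (@blkA C) bs i j = 0) ->
  (forall j, (j < T)%N -> \sum_(0 <= i < T) U1 i * blkdiag (@blkB C) bs i j = 0) ->
  (forall j, (j < T)%N -> \sum_(0 <= i < T) U0 i * blkdiag (@blkB C) bs i j +
                          \sum_(0 <= i < T) U1 i * blkdiag (@blkA C) bs i j = 0) ->
  forall i, (i < T)%N -> ~~ kron0_at bs i -> U0 i = 0 /\ U1 i = 0.
Proof.
elim: bs U0 U1 => [|b bs IH] U0 U1 /=; first by move=> _ _ _ _ i; rewrite big_nil.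
rewrite big_cons; set s := jksize b; set T := (\sum_(b0 <- bs) jksize b0)%N.
move=> /eqP; rewrite addn_eq0 => /andP[/eqP n1 /eqP c1] HA HB HC i hi.
case: (ltnP i s) => his.
  move=> n0; apply: (blk_single (b:=b)) => //; first by case: (is_Kron 1 b) n1.
  - by move=> j hj; have := HA j (ltn_addr _ hj); rewrite blkdiag_sum hj.
  - by move=> j hj; have := HB j (ltn_addr _ hj); rewrite blkdiag_sum hj.
  - by move=> j hj; have := HC j (ltn_addr _ hj); rewrite !blkdiag_sum hj.
move=> nk.
have hi' : (i - s < T)%N by rewrite ltn_subLR.
have := IH (fun k => U0 (s + k)%N) (fun k => U1 (s + k)%N) c1 _ _ _ _ hi' nk.
rewrite subnKC //; apply.
- move=> j hj; have := HA (s + j)%N; rewrite ltn_add2l hj => /(_ isT).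
  by rewrite blkdiag_sum ltnNge leq_addr /= addKn.
- move=> j hj; have := HB (s + j)%N; rewrite ltn_add2l hj => /(_ isT).
  by rewrite blkdiag_sum ltnNge leq_addr /= addKn.
- move=> j hj; have := HC (s + j)%N; rewrite ltn_add2l hj => /(_ isT).
  by rewrite !blkdiag_sum ltnNge leq_addr /= addKn.
Qed.

Lemma kron0_count bs i : kron0_at bs i -> (0 < count (is_Kron 0) bs)%N.
Proof.
elim: bs i => [|b bs IH] i //=.
case: ltnP => _; first by move=> ->.
by move=> /IH; rewrite addn_gt0 => ->; rewrite orbT.
Qed.

Lemma kron0_uniq bs i j : (count (is_Kron 0) bs <= 1)%N ->
  kron0_at bs i -> kron0_at bs j -> i = j.
Proof.
elim: bs i j => [|b bs IH] i j //=.
case: ltnP => hi; case: ltnP => hj.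
- case: b hi hj => // k /= hi hj _ /eqP E _; subst k; move: hi hj.
  by rewrite /= !ltnS !leqn0 => /eqP -> /eqP ->.
- case Eb: (is_Kron 0 b) => // c _ /kron0_count.
  by move: c; rewrite add1n ltnS leqn0 => /eqP ->.
- case Eb: (is_Kron 0 b) => // c /kron0_count.
  by move: c; rewrite add1n ltnS leqn0 => /eqP ->.
- move=> c ki kj.
  have c' : (count (is_Kron 0) bs <= 1)%N.
    by apply: leq_trans c; rewrite leq_addl.
  have := IH _ _ c' ki kj => /(congr1 (addn (jksize b))).
  by rewrite !subnKC.
Qed.

End Blk.



Section Lie.
Variable C : numClosedFieldType.
Variable n : nat.
Variable br : 'rV[C]_n -> 'rV[C]_n -> 'rV[C]_n.
Hypothesis Hbr : @is_lie_bracket C n br.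

Lemma brDl x y z : br (x + y) z = br x z + br y z.
Proof. by have [L _ _ _] := Hbr; have := L 1 x y z; rewrite !scale1r. Qed.
Lemma brDr x y z : br z (x + y) = br z x + br z y.
Proof. by have [_ L _ _] := Hbr; have := L 1 z x y; rewrite !scale1r. Qed.
Lemma br0l z : br 0 z = 0.
Proof. by have := brDl 0 0 z; rewrite addr0 -[X in X = _]addr0 => /addrI <-. Qed.
Lemma br0r z : br z 0 = 0.
Proof. by have := brDr 0 0 z; rewrite addr0 -[X in X = _]addr0 => /addrI <-. Qed.
Lemma brZl c x z : br (c *: x) z = c *: br x z.
Proof. by have [L _ _ _] := Hbr; rewrite -(addr0 (c *: x)) L br0l addr0. Qed.
Lemma brZr c x z : br z (c *: x) = c *: br z x.
Proof. by have [_ L _ _] := Hbr; rewrite -(addr0 (c *: x)) L br0r addr0. Qed.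
Lemma brN x y : br x y = - br y x.
Proof.
have [_ _ A _] := Hbr; have := A (x + y).
rewrite brDl !brDr !A add0r addr0 => /eqP; rewrite addr_eq0 => /eqP //.
Qed.

Lemma dpairC (x y : 'rV[C]_n) : dpair x y = dpair y x.
Proof. by apply: eq_bigr => i _; rewrite mulrC. Qed.
Lemma dpairD (x y z : 'rV[C]_n) : dpair x (y + z) = dpair x y + dpair x z.
Proof. by rewrite /dpair -big_split; apply: eq_bigr => i _; rewrite mxE mulrDr. Qed.
Lemma dpairZ (x : 'rV[C]_n) c y : dpair x (c *: y) = c * dpair x y.
Proof. by rewrite /dpair mulr_sumr; apply: eq_bigr => i _; rewrite mxE mulrCA. Qed.
Lemma dpair0 (x : 'rV[C]_n) : dpair x 0 = 0.
Proof. by rewrite /dpair big1 // => i _; rewrite mxE mulr0. Qed.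
Lemma dpairB (x y z : 'rV[C]_n) : dpair x (y - z) = dpair x y - dpair x z.
Proof. by rewrite dpairD -scaleN1r dpairZ mulN1r. Qed.
Lemma dpair_delta k (e : 'rV[C]_n) : dpair (delta_mx 0 k) e = e 0 k.
Proof.
rewrite /dpair (bigD1 k) //= big1 ?addr0; first by rewrite mxE !eqxx mul1r.
by move=> i /negbTE ne; rewrite mxE ne andbF mul0r.
Qed.

Lemma formA_row (x v : 'rV[C]_n) j :
  (v *m formA br x) 0 j = dpair x (br v (delta_mx 0 j)).
Proof.
rewrite mxE {2}(row_sum_delta v).
rewrite (big_morph (fun y => br y (delta_mx 0 j)) (fun a b => brDl a b (delta_mx 0 j)) (br0l _)).
rewrite (big_morph (dpair x) (dpairD x) (dpair0 x)).
by apply: eq_bigr => i _; rewrite brZl dpairZ mxE.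
Qed.

Lemma core (f : 'rV[C]_n -> C) (e1 e2 : 'rV[C]_n) :
  (forall u, br u e1 = f u *: e1) -> (forall u, br u e2 = f u *: e2) ->
  e2 != 0 -> (forall c : C, e1 <> c *: e2) -> JK_no3_atmost1_one br -> False.
Proof.
move=> H1 H2 ne2 nprop [p hp HJK].
have indep : forall al be : C, al *: e1 + be *: e2 = 0 -> al = 0 /\ be = 0.
  move=> al be E.
  have hal : al = 0.
    apply/eqP; apply/negPn/negP => hal; apply: (nprop (- be / al)).
    apply/rowP => i; have := congr1 (fun v : 'rV[C]_n => v 0 i) E; rewrite !mxE => E'.
    apply: (mulfI hal).
    have -> : al * (- be / al * e2 0 i) = - (be * e2 0 i) by field.
    by apply/eqP; rewrite -addr_eq0 E'.
  split => //; move: E; rewrite hal scale0r add0r => /eqP; rewrite scaler_eq0.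
  by rewrite (negbTE ne2) orbF => /eqP.
pose w := fun x : 'rV[C]_n => dpair x e2 *: e1 - dpair x e1 *: e2.
have br_w : forall x u, br (w x) u = - f u *: w x.
  move=> x u; rewrite /w brDl -scaleNr !brZl (brN e1 u) (brN e2 u) H1 H2.
  by apply/rowP => i; rewrite !mxE; ring.
have dw : forall x, dpair x (w x) = 0.
  by move=> x; rewrite /w dpairB !dpairZ mulrC subrr.
have cross : forall x a, dpair a (w x) + dpair x (w a) = 0.
  move=> x a; rewrite /w !dpairB !dpairZ; ring.
have kA : forall x, w x *m formA br x = 0.
  by move=> x; apply/rowP => j; rewrite formA_row br_w dpairZ dw mulr0 mxE.
have kC : forall x a, w x *m formA br a + w a *m formA br x = 0.
  move=> x a; apply/rowP => j; rewrite [LHS]mxE !formA_row !br_w !dpairZ -mulrDr.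
  by rewrite cross mulr0 mxE.
pose D := fun x a : 'rV[C]_n => dpair x e1 * dpair a e2 - dpair x e2 * dpair a e1.
have [j hj] : exists j, e2 0 j != 0.
  have : [exists j, e2 0 j != 0].
    apply: contraR ne2 => /existsPn H; apply/eqP/rowP => j; rewrite mxE.
    by apply/eqP; move: (H j); rewrite negbK.
  by case/existsP => j hj; exists j.
pose g := e1 - (e1 0 j / e2 0 j) *: e2.
have [k hk] : exists k, g 0 k != 0.
  have : [exists k, g 0 k != 0].
    apply: contraT => /existsPn H; exfalso; apply: (nprop (e1 0 j / e2 0 j)).
    apply/eqP; rewrite -subr_eq0; apply/eqP/rowP => k; rewrite [RHS]mxE.
    by apply/eqP; move: (H k); rewrite negbK.
  by case/existsP => k hk; exists k.
have DN : D (delta_mx 0 k) (delta_mx 0 j) != 0.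
  rewrite /D !dpair_delta; rewrite /g !mxE in hk.
  have -> : e1 0 k * e2 0 j - e2 0 k * e1 0 j =
            e2 0 j * (e1 0 k - e1 0 j / e2 0 j * e2 0 k) by field.
  by rewrite mulf_neq0.
pose L := fun (e : 'rV[C]_n) (s : 'I_n -> 'I_(n + n)) =>
  \sum_(i < n) (e 0 i)%:MP * 'X_(s i) : {mpoly C[n + n]}.
pose q := L e1 (lshift n) * L e2 (@rshift n n) - L e2 (lshift n) * L e1 (@rshift n n).
have Ll : forall x a e, (L e (lshift n)).@[fun i => row_mx x a 0 i] = dpair x e.
  move=> x a e; rewrite /L raddf_sum; apply: eq_bigr => i _.
  by rewrite /= mevalM mevalC mevalXU row_mxEl mulrC.
have Lr : forall x a e, (L e (@rshift n n)).@[fun i => row_mx x a 0 i] = dpair a e.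
  move=> x a e; rewrite /L raddf_sum; apply: eq_bigr => i _.
  by rewrite /= mevalM mevalC mevalXU row_mxEr mulrC.
have qE : forall x a, q.@[fun i => row_mx x a 0 i] = D x a.
  by move=> x a; rewrite /q mevalB !mevalM !Ll !Lr.
have qn0 : q != 0.
  apply/eqP => q0; move: DN; rewrite -qE q0 meval0 eqxx //.
have : p * q != 0 by rewrite mulf_neq0.
apply/negP; rewrite negbK; apply/eqP; apply: mpoly_evals0 => v.
case: (eqVneq ((p * q).@[v]) 0) => // hv; exfalso.
pose x := \row_i v (lshift n i); pose a := \row_i v (@rshift n n i).
have Ev : forall r : {mpoly C[n + n]}, r.@[v] = r.@[fun i => row_mx x a 0 i].
  move=> r; apply: meval_eq => i.
  by rewrite -(splitK i); case: (split i) => l /=; rewrite ?row_mxEl ?row_mxEr mxE.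
move: hv; rewrite mevalM !Ev mulf_eq0 negb_or qE => /andP [hpv hqv].
have [bs [[HT [P Pu [EA EB]]] [c1 c0]]] := HJK x a hpv.
pose u0 := w x *m invmx P; pose u1 := w a *m invmx P.
have eA : u0 *m (\matrix_(i < n, l < n) blkdiag (@blkA C) bs i l) = 0.
  by rewrite -EA /u0 !mulmxA mulmxKV // kA mul0mx.
have eB : u1 *m (\matrix_(i < n, l < n) blkdiag (@blkB C) bs i l) = 0.
  by rewrite -EB /u1 !mulmxA mulmxKV // kA mul0mx.
have eC : u0 *m (\matrix_(i < n, l < n) blkdiag (@blkB C) bs i l) +
          u1 *m (\matrix_(i < n, l < n) blkdiag (@blkA C) bs i l) = 0.
  by rewrite -EA -EB /u0 /u1 !mulmxA !mulmxKV // -mulmxDl kC mul0mx.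
pose U := fun (u : 'rV[C]_n) (k : nat) => \sum_(i < n | val i == k) u 0 i.
have UE : forall u (i : 'I_n), U u i = u 0 i.
  by move=> u i; rewrite /U (big_pred1 i).
have conv : forall u (F : nat -> nat -> C) (j : 'I_n),
    (u *m \matrix_(i, j) F i j) 0 j = \sum_(0 <= i < n) U u i * F i j.
  move=> u F l; rewrite mxE big_mkord; apply: eq_bigr => i _; by rewrite mxE UE.
have Hz := @blk_all C bs (U u0) (U u1); rewrite /= HT in Hz.
have {Hz} Hz : forall i, (i < n)%N -> ~~ kron0_at bs i -> U u0 i = 0 /\ U u1 i = 0.
  apply: Hz => // l hl.
  - by have := congr1 (fun m : 'rV[C]_n => m 0 (Ordinal hl)) eA; rewrite conv mxE.
  - by have := congr1 (fun m : 'rV[C]_n => m 0 (Ordinal hl)) eB; rewrite conv mxE.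
  - by have := congr1 (fun m : 'rV[C]_n => m 0 (Ordinal hl)) eC; rewrite mxE !conv mxE.
have [t Ht] : exists t : nat, forall i : 'I_n, val i != t -> u0 0 i = 0 /\ u1 0 i = 0.
  case: (pickP (fun i : 'I_n => kron0_at bs i)) => [t0 Ht0 | none].
  - exists (val t0) => i ne; rewrite -!UE; apply: Hz => //.
    by apply/negP => ki; move/eqP: ne; apply; exact: (kron0_uniq c0 ki Ht0).
  - by exists 0%N => i _; rewrite -!UE; apply: Hz => //; rewrite none.
pose r0 := \row_(i < n) (if val i == t then (1 : C) else 0).
have U0E : u0 = U u0 t *: r0.
  apply/rowP => i; rewrite [RHS]mxE [r0 0 i]mxE; case: eqP => [<-|/eqP ne].
    by rewrite UE mulr1.
  by rewrite mulr0; case: (Ht i ne).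
have U1E : u1 = U u1 t *: r0.
  apply/rowP => i; rewrite [RHS]mxE [r0 0 i]mxE; case: eqP => [<-|/eqP ne].
    by rewrite UE mulr1.
  by rewrite mulr0; case: (Ht i ne).
have wx : w x = U u0 t *: (r0 *m P) by rewrite scalemxAl -U0E /u0 mulmxKV.
have wa : w a = U u1 t *: (r0 *m P) by rewrite scalemxAl -U1E /u1 mulmxKV.
set al := U u0 t; set be := U u1 t.
have E : (be * dpair x e2 - al * dpair a e2) *: e1 + (al * dpair a e1 - be * dpair x e1) *: e2 = 0.
  have E0 : be *: w x - al *: w a = 0 by rewrite wx wa !scalerA mulrC subrr.
  rewrite -E0 /w; apply/rowP => i; rewrite !mxE; ring.
have [E1 E2] := indep _ _ E.
have hal : al = 0.
  have : al * D x a = 0.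
    have -> : al * D x a = - dpair x e1 * (be * dpair x e2 - al * dpair a e2)
                           - dpair x e2 * (al * dpair a e1 - be * dpair x e1) by rewrite /D; ring.
    by rewrite E1 E2 !mulr0 subr0.
  by move/eqP; rewrite mulf_eq0 (negbTE hqv) orbF => /eqP.
have hbe : be = 0.
  have : be * D x a = 0.
    have -> : be * D x a = - dpair a e2 * (al * dpair a e1 - be * dpair x e1)
                           - dpair a e1 * (be * dpair x e2 - al * dpair a e2) by rewrite /D; ring.
    by rewrite E1 E2 !mulr0 subr0.
  by move/eqP; rewrite mulf_eq0 (negbTE hqv) orbF => /eqP.
have W0 : w x = 0 by rewrite wx -/al hal scale0r.
have := indep (dpair x e2) (- dpair x e1); rewrite scaleNr => /(_ W0) [X2 X1].
move/eqP: X1; rewrite oppr_eq0 => /eqP X1.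
by move: hqv; rewrite /D X1 X2 !mul0r subrr eqxx.
Qed.

End Lie.

Lemma main_ind (C : numClosedFieldType) (n : nat)
    (br : 'rV[C]_n -> 'rV[C]_n -> 'rV[C]_n) (Hbr : is_lie_bracket br) N
    (e : 'I_N -> 'rV[C]_n) (chi : 'I_N -> 'rV[C]_n) :
  (forall i, e i != 0) -> (forall i u, br u (e i) = dpair (chi i) u *: e i) ->
  (forall i j, i != j -> ~ exists c : C, e i = c *: e j) ->
  JK_no3_atmost1_one br ->
  forall c : 'I_N -> C, \sum_(i < N) c i *: e i = 0 -> forall i, c i = 0.
Proof.
elim: N e chi => [|N IH] e chi ne Hch Hnp HJK c Hc; first by case.
pose wd := fun i : 'I_N => widen_ord (leqnSn N) i.
have wdE : forall i, lift ord_max i = wd i by move=> i; apply: val_inj; rewrite [LHS]lift_max.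
have IH' := IH (fun i => e (wd i)) (fun i => chi (wd i)) (fun i => ne (wd i))
  (fun i => Hch (wd i)).
have {IH'} IH' : forall c' : 'I_N -> C, \sum_(i < N) c' i *: e (wd i) = 0 -> forall i, c' i = 0.
  apply: IH' => // i j ij; apply: Hnp; apply: contra ij => /eqP E.
  by apply/eqP/val_inj; move/(congr1 val): E.
have step : forall u (i : 'I_N), c (wd i) * (dpair (chi (wd i)) u - dpair (chi ord_max) u) = 0.
  move=> u; apply: IH'.
  have Hb : br u (\sum_(i < N.+1) c i *: e i) = 0 by rewrite Hc br0r.
  rewrite (big_morph (br u) (fun a b => brDr Hbr a b u) (br0r Hbr u)) in Hb.
  have Hb' : \sum_(i < N.+1) (c i * (dpair (chi i) u - dpair (chi ord_max) u)) *: e i = 0.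
    have -> : \sum_(i < N.+1) (c i * (dpair (chi i) u - dpair (chi ord_max) u)) *: e i =
      \sum_(i < N.+1) br u (c i *: e i) - dpair (chi ord_max) u *: \sum_(i < N.+1) c i *: e i.
      rewrite scaler_sumr -sumrB.
      apply: eq_bigr => i _; rewrite (brZr Hbr) Hch !scalerA -scalerBl; congr (_ *: _); ring.
    by rewrite Hb Hc scaler0 subr0.
  by rewrite big_ord_recr /= subrr mulr0 scale0r addr0 in Hb'.
have cw : c ord_max = 0 -> forall i, c i = 0.
  move=> c0.
  have Hc' : \sum_(i < N) c (wd i) *: e (wd i) = 0.
    by rewrite big_ord_recr /= c0 scale0r addr0 in Hc.
  move=> i; case: (unliftP ord_max i) => [j ->|->] //.
  by rewrite wdE; apply: (IH' (fun j => c (wd j))).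
case: (eqVneq (c ord_max) 0) => [/cw //|cm].
exfalso.
case: (pickP (fun i : 'I_N => c (wd i) != 0)) => [i0 hi0 | none].
- have Eq : forall u, dpair (chi (wd i0)) u = dpair (chi ord_max) u.
    move=> u; have := step u i0; move/eqP; rewrite mulf_eq0 (negbTE hi0) /= subr_eq0.
    by move/eqP.
  apply: (core Hbr (f := fun u => dpair (chi ord_max) u) (e1 := e (wd i0)) (e2 := e ord_max)) => //.
  + by move=> u; rewrite Hch Eq.
  + move=> c' E; apply: (Hnp (wd i0) ord_max); last by exists c'.
    by rewrite -val_eqE /= neq_ltn ltn_ord.
- have Hc' : c ord_max *: e ord_max = 0.
    rewrite big_ord_recr /= big1 ?add0r in Hc => //.
    by move=> i _; move: (none i) => /negbFE/eqP ->; rewrite scale0r.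
  by move/eqP: Hc'; rewrite scaler_eq0 (negbTE cm) (negbTE (ne _)).
Qed.

Unset Implicit Arguments.

Theorem lemma11 (C : numClosedFieldType) (n : nat)
    (br : 'rV[C]_n -> 'rV[C]_n -> 'rV[C]_n) (N : nat) (e : 'I_N -> 'rV[C]_n) :
  is_lie_bracket br ->
  (forall i, linear_semi_invariant br (e i)) ->
  (forall i j, i != j -> ~ exists c : C, e i = c *: e j) ->
  JK_no3_atmost1_one br ->
  forall c : 'I_N -> C, \sum_(i < N) c i *: e i = 0 -> forall i, c i = 0.
Proof.
move=> Hbr Hsi Hnp HJK.
have [chi Hchi] : exists chi : 'I_N -> 'rV[C]_n,
    forall i u, br u (e i) = dpair (chi i) u *: e i.
  apply: (@fin_all_exists _ (fun _ => 'rV[C]_n) (fun i chi => forall u, br u (e i) = dpair chi u *: e i)) => i.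
  by case: (Hsi i).
move=> c Hc; exact: (main_ind Hbr (fun i => proj1 (Hsi i)) Hchi Hnp HJK Hc).
Qed.
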